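(* The variety $\mathcal{WHB}$ of WHB-algebras has the finite model property, i.e. every equation that fails in some WHB-algebra fails in some finite WHB-algebra.
   Context: A WHB-algebra is an algebra $(A,\wedge,\vee,\to,\leftarrow,0,1)$ such that $(A,\wedge,\vee,0,1)$ is a bounded distributive lattice and for all $a,b,c\in A$: $a\to a=1$; $a\to(b\wedge c)=(a\to b)\wedge(a\to c)$; $(a\vee b)\to c=(a\to c)\wedge(b\to c)$; $(a\to b)\wedge(b\to c)\le a\to c$; $a\leftarrow a=0$; $(a\vee b)\leftarrow c=(a\leftarrow c)\vee(b\leftarrow c)$; $a\leftarrow(b\wedge c)=(a\leftarrow b)\vee(a\leftarrow c)$; $a\leftarrow c\le(a\leftarrow b)\vee(b\leftarrow c)$; $a\wedge((a\to b)\leftarrow 0)\le b$; $a\le b\vee(1\to(a\leftarrow b))$. *)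

(* Defs.v *)
From Stdlib Require Import List.

Record WHBAlgebra := {
  carrier :> Type;
  meet : carrier -> carrier -> carrier;
  join : carrier -> carrier -> carrier;
  imp : carrier -> carrier -> carrier;
  coimp : carrier -> carrier -> carrier;
  bot : carrier;
  top : carrier;
  meet_assoc : forall a b c, meet a (meet b c) = meet (meet a b) c;
  join_assoc : forall a b c, join a (join b c) = join (join a b) c;
  meet_comm : forall a b, meet a b = meet b a;
  join_comm : forall a b, join a b = join b a;
  meet_absorb : forall a b, meet a (join a b) = a;
  join_absorb : forall a b, join a (meet a b) = a;
  meet_join_distr : forall a b c, meet a (join b c) = join (meet a b) (meet a c);
  join_bot : forall a, join a bot = a;
  meet_top : forall a, meet a top = a;
  (* WHB axioms; x <= y is written join x y = y *)
  imp_refl : forall a, imp a a = top;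
  imp_meet : forall a b c, imp a (meet b c) = meet (imp a b) (imp a c);
  imp_join : forall a b c, imp (join a b) c = meet (imp a c) (imp b c);
  imp_trans : forall a b c,
      join (meet (imp a b) (imp b c)) (imp a c) = imp a c;
  coimp_refl : forall a, coimp a a = bot;
  coimp_join : forall a b c, coimp (join a b) c = join (coimp a c) (coimp b c);
  coimp_meet : forall a b c, coimp a (meet b c) = join (coimp a b) (coimp a c);
  coimp_trans : forall a b c,
      join (coimp a c) (join (coimp a b) (coimp b c)) = join (coimp a b) (coimp b c);
  mp_axiom : forall a b, join (meet a (coimp (imp a b) bot)) b = b;
  cmp_axiom : forall a b, join a (join b (imp top (coimp a b))) = join b (imp top (coimp a b))
}.

Definition le (A : WHBAlgebra) (x y : A) : Prop := join A x y = y.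

Inductive term : Type :=
| tVar : nat -> term
| tMeet : term -> term -> term
| tJoin : term -> term -> term
| tImp : term -> term -> term
| tCoimp : term -> term -> term
| tBot : term
| tTop : term.

Fixpoint eval (A : WHBAlgebra) (v : nat -> A) (t : term) : A :=
  match t with
  | tVar n => v n
  | tMeet s u => meet A (eval A v s) (eval A v u)
  | tJoin s u => join A (eval A v s) (eval A v u)
  | tImp s u => imp A (eval A v s) (eval A v u)
  | tCoimp s u => coimp A (eval A v s) (eval A v u)
  | tBot => bot A
  | tTop => top A
  end.

Definition fails_in (A : WHBAlgebra) (s t : term) : Prop :=
  exists v : nat -> A, eval A v s <> eval A v t.

Definition finite_algebra (A : WHBAlgebra) : Prop :=
  exists l : list A, forall x : A, In x l.

(* Main.v *)
Require Import Defs.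
From Stdlib Require Import List Classical ClassicalEpsilon FunctionalExtensionality PropExtensionality ProofIrrelevance Arith Lia Wf_nat.
Import ListNotations.

Section Pow.
Variable X : Type.
Variable R : X -> X -> Prop.
Definition PS := X -> Prop.
Definition pmeet (U V : PS) : PS := fun x => U x /\ V x.
Definition pjoin (U V : PS) : PS := fun x => U x \/ V x.
Definition pimp (U V : PS) : PS := fun x => forall y, R x y -> U y -> V y.
Definition pcoimp (U V : PS) : PS := fun x => exists y, R y x /\ U y /\ ~ V y.
Definition pbot : PS := fun _ => False.
Definition ptop : PS := fun _ => True.

Ltac pext := intros; extensionality x; apply propositional_extensionality;
  unfold pmeet, pjoin, pimp, pcoimp, pbot, ptop.

Lemma p1 : forall a b c, pmeet a (pmeet b c) = pmeet (pmeet a b) c. Proof. pext; tauto. Qed.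
Lemma p2 : forall a b c, pjoin a (pjoin b c) = pjoin (pjoin a b) c. Proof. pext; tauto. Qed.
Lemma p3 : forall a b, pmeet a b = pmeet b a. Proof. pext; tauto. Qed.
Lemma p4 : forall a b, pjoin a b = pjoin b a. Proof. pext; tauto. Qed.
Lemma p5 : forall a b, pmeet a (pjoin a b) = a. Proof. pext; tauto. Qed.
Lemma p6 : forall a b, pjoin a (pmeet a b) = a. Proof. pext; tauto. Qed.
Lemma p7 : forall a b c, pmeet a (pjoin b c) = pjoin (pmeet a b) (pmeet a c). Proof. pext; tauto. Qed.
Lemma p8 : forall a, pjoin a pbot = a. Proof. pext; tauto. Qed.
Lemma p9 : forall a, pmeet a ptop = a. Proof. pext; tauto. Qed.
Lemma p10 : forall a, pimp a a = ptop. Proof. pext; firstorder. Qed.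
Lemma p11 : forall a b c, pimp a (pmeet b c) = pmeet (pimp a b) (pimp a c). Proof. pext; firstorder. Qed.
Lemma p12 : forall a b c, pimp (pjoin a b) c = pmeet (pimp a c) (pimp b c). Proof. pext; firstorder. Qed.
Lemma p13 : forall a b c, pjoin (pmeet (pimp a b) (pimp b c)) (pimp a c) = pimp a c.
Proof. pext; firstorder. Qed.
Lemma p14 : forall a, pcoimp a a = pbot. Proof. pext; firstorder. Qed.
Lemma p15 : forall a b c, pcoimp (pjoin a b) c = pjoin (pcoimp a c) (pcoimp b c).
Proof. pext; firstorder. Qed.
Lemma p16 : forall a b c, pcoimp a (pmeet b c) = pjoin (pcoimp a b) (pcoimp a c).
Proof. pext. split.
  - intros [y [H1 [H2 H3]]]. apply not_and_or in H3. destruct H3; [left|right]; eauto.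
  - intros [[y [H1 [H2 H3]]]|[y [H1 [H2 H3]]]]; exists y; tauto.
Qed.
Lemma p17 : forall a b c, pjoin (pcoimp a c) (pjoin (pcoimp a b) (pcoimp b c)) = pjoin (pcoimp a b) (pcoimp b c).
Proof. pext. split; [|tauto].
  intros [[y [H1 [H2 H3]]]|H]; [|exact H].
  destruct (classic (b y)); [right|left]; exists y; tauto.
Qed.
Lemma p18 : forall a b, pjoin (pmeet a (pcoimp (pimp a b) pbot)) b = b.
Proof. pext. split; [|tauto]. intros [[H1 [y [H2 [H3 _]]]]|H]; eauto. Qed.
Lemma p19 : forall a b, pjoin a (pjoin b (pimp ptop (pcoimp a b))) = pjoin b (pimp ptop (pcoimp a b)).
Proof. pext. split; [|tauto]. intros [H|H]; [|exact H].
  destruct (classic (b x)); [left; auto|right]. intros y Hy _. exists x; tauto.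
Qed.

Definition powalg : WHBAlgebra :=
  {| carrier := PS; meet := pmeet; join := pjoin; imp := pimp; coimp := pcoimp;
     bot := pbot; top := ptop;
     meet_assoc := p1; join_assoc := p2; meet_comm := p3; join_comm := p4;
     meet_absorb := p5; join_absorb := p6; meet_join_distr := p7; join_bot := p8;
     meet_top := p9; imp_refl := p10; imp_meet := p11; imp_join := p12; imp_trans := p13;
     coimp_refl := p14; coimp_join := p15; coimp_meet := p16; coimp_trans := p17;
     mp_axiom := p18; cmp_axiom := p19 |}.
End Pow.

Section Lat.
Variable A : WHBAlgebra.
Local Notation Mt := (meet A).
Local Notation Jn := (join A).
Local Notation Im := (imp A).
Local Notation Co := (coimp A).
Local Notation Bt := (bot A).
Local Notation Tp := (top A).
Local Notation Le := (le A).

Lemma join_idem a : Jn a a = a.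
Proof. rewrite <- (meet_absorb A a a) at 2. apply join_absorb. Qed.
Lemma meet_idem a : Mt a a = a.
Proof. rewrite <- (join_absorb A a a) at 2. apply meet_absorb. Qed.
Lemma le_refl a : Le a a. Proof. apply join_idem. Qed.
Lemma le_trans a b c : Le a b -> Le b c -> Le a c.
Proof. unfold le; intros H1 H2. rewrite <- H2, join_assoc, H1; reflexivity. Qed.
Lemma le_antisym a b : Le a b -> Le b a -> a = b.
Proof. unfold le; intros H1 H2. rewrite <- H1, join_comm. symmetry; exact H2. Qed.
Lemma le_meet a b : Le a b <-> Mt a b = a.
Proof. unfold le; split; intro H.
  - rewrite <- H. apply meet_absorb.
  - rewrite <- H. rewrite join_comm, meet_comm. apply join_absorb.
Qed.
Lemma meet_glb x a b : Le x a -> Le x b -> Le x (Mt a b).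
Proof. rewrite !le_meet. intros H1 H2. rewrite meet_assoc, H1, H2. reflexivity. Qed.
Lemma meet_lb1 a b : Le (Mt a b) a.
Proof. apply le_meet. rewrite (meet_comm A (Mt a b) a), meet_assoc, meet_idem. reflexivity. Qed.
Lemma meet_lb2 a b : Le (Mt a b) b.
Proof. rewrite meet_comm. apply meet_lb1. Qed.
Lemma join_ub1 a b : Le a (Jn a b).
Proof. unfold le. rewrite join_assoc, join_idem. reflexivity. Qed.
Lemma join_ub2 a b : Le b (Jn a b).
Proof. rewrite join_comm. apply join_ub1. Qed.
Lemma join_lub a b c : Le a c -> Le b c -> Le (Jn a b) c.
Proof. unfold le; intros H1 H2. rewrite <- join_assoc, H2, H1. reflexivity. Qed.
Lemma bot_le a : Le Bt a.
Proof. unfold le. rewrite join_comm. apply join_bot. Qed.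
Lemma le_top a : Le a Tp.
Proof. unfold le. rewrite <- (meet_top A a) at 1. rewrite join_comm, meet_comm. apply join_absorb. Qed.
Lemma distr_r a b c : Mt (Jn a b) c = Jn (Mt a c) (Mt b c).
Proof. rewrite meet_comm, meet_join_distr, (meet_comm A c a), (meet_comm A c b). reflexivity. Qed.
Lemma distr2 a b c : Le (Mt (Jn a b) (Jn a c)) (Jn a (Mt b c)).
Proof.
  rewrite distr_r. apply join_lub.
  - apply le_trans with a; [apply meet_lb1|apply join_ub1].
  - rewrite meet_join_distr. apply join_lub.
    + apply le_trans with a; [apply meet_lb2|apply join_ub1].
    + apply join_ub2.
Qed.
Lemma meet_mono a a' b b' : Le a a' -> Le b b' -> Le (Mt a b) (Mt a' b').
Proof. intros. apply meet_glb; [apply le_trans with a|apply le_trans with b]; auto using meet_lb1, meet_lb2. Qed.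
Lemma join_mono a a' b b' : Le a a' -> Le b b' -> Le (Jn a b) (Jn a' b').
Proof. intros. apply join_lub; [apply le_trans with a'|apply le_trans with b']; auto using join_ub1, join_ub2. Qed.

Lemma imp_anti1 a a' b : Le a a' -> Le (Im a' b) (Im a b).
Proof. intro H. unfold le at 1 in H. rewrite <- H, imp_join. apply meet_lb1. Qed.
Lemma imp_mono2 a b b' : Le b b' -> Le (Im a b) (Im a b').
Proof. intro H. apply le_meet in H. rewrite <- H at 1. rewrite imp_meet. apply meet_lb2. Qed.
Lemma imp_top a b : Le a b -> Im a b = Tp.
Proof. intro H. apply le_antisym; [apply le_top|]. rewrite <- (imp_refl A a) at 1. apply imp_mono2; auto. Qed.
Lemma coimp_mono1 a a' b : Le a a' -> Le (Co a b) (Co a' b).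
Proof. intro H. unfold le at 1 in H. rewrite <- H, coimp_join. apply join_ub1. Qed.
Lemma coimp_anti2 a b b' : Le b b' -> Le (Co a b') (Co a b).
Proof. intro H. apply le_meet in H. rewrite <- H. rewrite coimp_meet. apply join_ub2. Qed.
Lemma coimp_le_bot a b : Le a b -> Le (Co a b) Bt.
Proof. intro H. apply le_trans with (Co b b); [apply coimp_mono1; auto|]. rewrite coimp_refl. apply le_refl. Qed.
Lemma imp_trL a b c : Le (Mt (Im a b) (Im b c)) (Im a c). Proof. apply imp_trans. Qed.
Lemma coimp_trL a b c : Le (Co a c) (Jn (Co a b) (Co b c)). Proof. apply coimp_trans. Qed.
Lemma mpL a b : Le (Mt a (Co (Im a b) Bt)) b. Proof. apply mp_axiom. Qed.
Lemma cmpL a b : Le a (Jn b (Im Tp (Co a b))). Proof. apply cmp_axiom. Qed.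

Lemma rel_equiv p q a b : Le p (Jn a (Im q b)) <-> Le (Mt q (Co p a)) b.
Proof. split; intro H.
  - eapply le_trans; [|apply (mpL q b)]. apply meet_mono; [apply le_refl|].
    eapply le_trans; [apply coimp_mono1; exact H|]. rewrite coimp_join, coimp_refl.
    apply join_lub; [apply bot_le|]. apply coimp_anti2, bot_le.
  - eapply le_trans; [apply (cmpL p a)|]. apply join_mono; [apply le_refl|].
    eapply le_trans; [apply (imp_anti1 q Tp); apply le_top|].
    eapply le_trans; [|apply imp_mono2; exact H].
    rewrite imp_meet, imp_refl. apply meet_glb; [apply le_top|apply le_refl].
Qed.

Definition meetl (l : list A) : A := fold_right Mt Tp l.
Definition joinl (l : list A) : A := fold_right Jn Bt l.

Lemma joinl_ub x l : In x l -> Le x (joinl l).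
Proof. induction l as [|a l IH]; simpl; [tauto|]. intros [->|H].
  - apply join_ub1.
  - eapply le_trans; [apply IH; auto|apply join_ub2].
Qed.
Lemma joinl_lub l z : (forall x, In x l -> Le x z) -> Le (joinl l) z.
Proof. induction l as [|a l IH]; simpl; intro H; [apply bot_le|]. apply join_lub; auto. Qed.
Lemma meetl_lb x l : In x l -> Le (meetl l) x.
Proof. induction l as [|a l IH]; simpl; [tauto|]. intros [->|H].
  - apply meet_lb1.
  - eapply le_trans; [apply meet_lb2|apply IH; auto].
Qed.
Lemma meetl_glb l z : (forall x, In x l -> Le z x) -> Le z (meetl l).
Proof. induction l as [|a l IH]; simpl; intro H; [apply le_top|]. apply meet_glb; auto. Qed.
Lemma joinl_app l1 l2 : joinl (l1 ++ l2) = Jn (joinl l1) (joinl l2).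
Proof. apply le_antisym.
  - apply joinl_lub. intros x Hx. apply in_app_or in Hx. destruct Hx.
    + eapply le_trans; [apply joinl_ub; eauto|apply join_ub1].
    + eapply le_trans; [apply joinl_ub; eauto|apply join_ub2].
  - apply join_lub; apply joinl_lub; intros; apply joinl_ub; apply in_or_app; auto.
Qed.
Lemma meetl_app l1 l2 : meetl (l1 ++ l2) = Mt (meetl l1) (meetl l2).
Proof. apply le_antisym.
  - apply meet_glb; apply meetl_glb; intros; apply meetl_lb; apply in_or_app; auto.
  - apply meetl_glb. intros x Hx. apply in_app_or in Hx. destruct Hx.
    + eapply le_trans; [apply meet_lb1|apply meetl_lb; eauto].
    + eapply le_trans; [apply meet_lb2|apply meetl_lb; eauto].
Qed.
Lemma joinl_ext l l' : (forall x, In x l <-> In x l') -> joinl l = joinl l'.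
Proof. intro H. apply le_antisym; apply joinl_lub; intros; apply joinl_ub; apply H; auto. Qed.
Lemma meetl_ext l l' : (forall x, In x l <-> In x l') -> meetl l = meetl l'.
Proof. intro H. apply le_antisym; apply meetl_glb; intros; apply meetl_lb; apply H; auto. Qed.

Lemma meet_bot_r x : Mt x Bt = Bt.
Proof. apply le_antisym; [apply meet_lb2|apply bot_le]. Qed.
Lemma meet_bot_l x : Mt Bt x = Bt.
Proof. apply le_antisym; [apply meet_lb1|apply bot_le]. Qed.

Fixpoint prodls (ls1 ls2 : list (list A)) : list (list A) :=
  match ls1 with
  | [] => []
  | l :: r => map (fun l2 => l ++ l2) ls2 ++ prodls r ls2
  end.

Lemma prodls_inner l ls2 :
  Mt (meetl l) (joinl (map meetl ls2)) = joinl (map meetl (map (fun l2 => l ++ l2) ls2)).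
Proof. induction ls2 as [|l2 r IH]; simpl.
  - apply meet_bot_r.
  - rewrite meet_join_distr, IH, meetl_app. reflexivity.
Qed.
Lemma prodls_eq ls1 ls2 :
  Mt (joinl (map meetl ls1)) (joinl (map meetl ls2)) = joinl (map meetl (prodls ls1 ls2)).
Proof. induction ls1 as [|l r IH]; simpl.
  - apply meet_bot_l.
  - rewrite distr_r, IH, map_app, joinl_app, prodls_inner. reflexivity.
Qed.
Lemma prodls_in l ls1 ls2 : In l (prodls ls1 ls2) ->
  exists l1 l2, In l1 ls1 /\ In l2 ls2 /\ l = l1 ++ l2.
Proof. induction ls1 as [|a r IH]; simpl; [tauto|]. intro H. apply in_app_or in H. destruct H as [H|H].
  - apply in_map_iff in H. destruct H as [l2 [<- H]]. exists a, l2; auto.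
  - destruct (IH H) as [l1 [l2 [? [? ?]]]]. exists l1, l2; auto.
Qed.

Variable G : list A.

Definition inD (x : A) : Prop :=
  exists ls : list (list A), (forall l, In l ls -> forall g, In g l -> In g G) /\ x = joinl (map meetl ls).

Lemma inD_bot : inD Bt. Proof. exists []; simpl; split; auto; tauto. Qed.
Lemma inD_top : inD Tp.
Proof. exists [[]]; simpl; split; [intros l [<-|[]]; simpl; tauto|]. rewrite join_bot. reflexivity. Qed.
Lemma inD_G g : In g G -> inD g.
Proof. intro H. exists [[g]]; simpl; split; [intros l [<-|[]] g' [<-|[]]; auto|].
  rewrite join_bot, meet_top. reflexivity. Qed.
Lemma inD_join x y : inD x -> inD y -> inD (Jn x y).
Proof. intros [l1 [H1 ->]] [l2 [H2 ->]]. exists (l1 ++ l2). split.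
  - intros l Hl. apply in_app_or in Hl. destruct Hl; eauto.
  - rewrite map_app, joinl_app. reflexivity.
Qed.
Lemma inD_meet x y : inD x -> inD y -> inD (Mt x y).
Proof. intros [l1 [H1 ->]] [l2 [H2 ->]]. exists (prodls l1 l2). split.
  - intros l Hl g Hg. destruct (prodls_in _ _ _ Hl) as [a [b [Ha [Hb ->]]]].
    apply in_app_or in Hg. destruct Hg; eauto.
  - apply prodls_eq.
Qed.
Lemma inD_joinl l : (forall x, In x l -> inD x) -> inD (joinl l).
Proof. induction l as [|a l IH]; simpl; intro H; [apply inD_bot|]. apply inD_join; auto. Qed.

Fixpoint pw {Y : Type} (l : list Y) : list (list Y) :=
  match l with
  | [] => [[]]
  | a :: r => map (cons a) (pw r) ++ pw r
  end.
Lemma filter_pw {Y : Type} (f : Y -> bool) l : In (filter f l) (pw l).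
Proof. induction l as [|a r IH]; simpl; [auto|]. destruct (f a); apply in_or_app; [left; apply in_map|right]; auto. Qed.

Definition dec (P : Prop) : bool := if excluded_middle_informative P then true else false.
Lemma dec_spec P : dec P = true <-> P.
Proof. unfold dec. destruct (excluded_middle_informative P); split; auto; discriminate. Qed.

Definition DL : list A := map (fun S => joinl (map meetl S)) (pw (pw G)).

Lemma inD_DL x : inD x -> In x DL.
Proof.
  intros [ls [H ->]].
  set (nf := fun l : list A => filter (fun g => dec (In g l)) G).
  assert (Hnf : forall l, (forall g, In g l -> In g G) -> forall g, In g (nf l) <-> In g l).
  { intros l Hl g. unfold nf. rewrite filter_In, dec_spec. firstorder. }
  set (ls' := map nf ls).
  assert (E1 : joinl (map meetl ls) = joinl (map meetl ls')).
  { unfold ls'. rewrite map_map. f_equal. apply map_ext_in. intros l Hl.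
    apply meetl_ext. intro g. rewrite Hnf; [tauto|]. apply H; auto. }
  set (S := filter (fun l => dec (In l ls')) (pw G)).
  assert (E2 : joinl (map meetl S) = joinl (map meetl ls')).
  { apply joinl_ext. intro y. rewrite !in_map_iff. split.
    - intros [l [Hl1 Hl2]]. exists l. unfold S in Hl2. rewrite filter_In, dec_spec in Hl2. tauto.
    - intros [l [Hl1 Hl2]]. exists l. split; auto. unfold S. rewrite filter_In, dec_spec. split; auto.
      unfold ls' in Hl2. apply in_map_iff in Hl2. destruct Hl2 as [l0 [<- _]]. apply filter_pw. }
  unfold DL. apply in_map_iff. exists S. split.
  - rewrite E2, E1. reflexivity.
  - apply filter_pw.
Qed.

Fixpoint cnt (Q : A -> Prop) (l : list A) : nat :=
  match l with
  | [] => 0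
  | a :: r => (if excluded_middle_informative (Q a) then 1 else 0) + cnt Q r
  end.
Lemma cnt_le (Q Q' : A -> Prop) l : (forall a, Q a -> Q' a) -> cnt Q l <= cnt Q' l.
Proof. intro H. induction l as [|a r IH]; simpl; [lia|].
  destruct (excluded_middle_informative (Q a)), (excluded_middle_informative (Q' a)); try lia.
  exfalso; auto.
Qed.
Lemma cnt_lt (Q Q' : A -> Prop) l a : (forall a, Q a -> Q' a) -> In a l -> Q' a -> ~ Q a ->
  cnt Q l < cnt Q' l.
Proof. intros H Ha H1 H2. induction l as [|b r IH]; simpl in *; [tauto|].
  pose proof (cnt_le Q Q' r H).
  destruct Ha as [->|Ha].
  - destruct (excluded_middle_informative (Q a)), (excluded_middle_informative (Q' a)); try tauto; lia.
  - specialize (IH Ha).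
    destruct (excluded_middle_informative (Q b)), (excluded_middle_informative (Q' b)); try lia.
    exfalso; auto.
Qed.

Lemma min_exists (Pr : A -> Prop) c : inD c -> Pr c ->
  exists p, inD p /\ Pr p /\ forall z, inD z -> Le z p -> Pr z -> Le p z.
Proof.
  intros Hc HP. remember (cnt (fun z => Le z c) DL) as n eqn:En.
  revert c Hc HP En. induction n as [n IH] using lt_wf_ind. intros c Hc HP En.
  destruct (classic (exists z, inD z /\ Le z c /\ Pr z /\ ~ Le c z)) as [[z [Hz1 [Hz2 [Hz3 Hz4]]]]|Hno].
  - apply (IH (cnt (fun w => Le w z) DL)) with (c := z); auto. subst n.
    apply cnt_lt with (a := c).
    + intros w Hw. eapply le_trans; eauto.
    + apply inD_DL; auto.
    + apply le_refl.
    + auto.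
  - exists c. split; [auto|split; [auto|]]. intros z Hz1 Hz2 Hz3. apply NNPP; intro Hz4.
    apply Hno. exists z; auto.
Qed.

Definition is_point (p : A) : Prop :=
  inD p /\ ~ Le p Bt /\ forall x y, inD x -> inD y -> Le p (Jn x y) -> Le p x \/ Le p y.

Lemma point_of_min (Pr : A -> Prop) c :
  (forall x y, Le x y -> Pr x -> Pr y) -> (forall x y, Pr (Jn x y) -> Pr x \/ Pr y) -> ~ Pr Bt ->
  inD c -> Pr c ->
  exists p, is_point p /\ Le p c /\ Pr p /\ forall z, inD z -> Le z p -> Pr z -> Le p z.
Proof.
  intros Hmon Hsp H0 Hc HP.
  destruct (min_exists (fun x => Le x c /\ Pr x) c Hc (conj (le_refl c) HP)) as [p [Hp [[Hpc HPp] Hmin]]].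
  exists p. split; [|split; [auto|split; [auto|]]].
  - split; [auto|split].
    + intro Hp0. apply H0. eapply Hmon; eauto.
    + intros x y Hx Hy Hxy. destruct (classic (Le p x)) as [?|Hnx]; [left; auto|]. right.
      apply NNPP; intro Hny.
      assert (Hs : Pr (Jn (Mt p x) (Mt p y))).
      { eapply Hmon; [|exact HPp]. rewrite <- meet_join_distr. apply meet_glb; [apply le_refl|auto]. }
      destruct (Hsp _ _ Hs) as [H1|H1].
      * apply Hnx. eapply le_trans; [apply (Hmin (Mt p x))|apply meet_lb2].
        -- apply inD_meet; auto.
        -- apply meet_lb1.
        -- split; auto. eapply le_trans; [apply meet_lb1|auto].
      * apply Hny. eapply le_trans; [apply (Hmin (Mt p y))|apply meet_lb2].
        -- apply inD_meet; auto.
        -- apply meet_lb1.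
        -- split; auto. eapply le_trans; [apply meet_lb1|auto].
  - intros z Hz Hzp HPz. apply Hmin; auto. split; auto. eapply le_trans; eauto.
Qed.

Definition mx (p : A) : A := joinl (filter (fun x => dec (inD x /\ ~ Le p x)) DL).

Lemma mx_inD p : inD (mx p).
Proof. apply inD_joinl. intros x Hx. apply filter_In in Hx. destruct Hx as [_ Hx].
  apply (proj1 (dec_spec _)) in Hx. destruct Hx as [Hx1 _]. exact Hx1. Qed.
Lemma mx_not p : is_point p -> ~ Le p (mx p).
Proof.
  intros [Hp [H0 Hpr]]. unfold mx.
  assert (Hgen : forall l, (forall x, In x l -> inD x /\ ~ Le p x) -> ~ Le p (joinl l)).
  { induction l as [|a l IH]; simpl; intros H; [auto|]. intro Hle.
    apply Hpr in Hle; [|apply H; auto|apply inD_joinl; intros; apply H; auto].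
    destruct Hle as [Hle|Hle]; [apply (H a); auto|apply IH; auto]. }
  apply Hgen. intros x Hx. apply filter_In in Hx. destruct Hx as [_ Hx]. apply (proj1 (dec_spec _)) in Hx. auto.
Qed.
Lemma mx_ge p x : inD x -> ~ Le p x -> Le x (mx p).
Proof. intros H1 H2. apply joinl_ub. apply filter_In. split; [apply inD_DL; auto|]. apply dec_spec; auto. Qed.

Definition Rel (p q : A) : Prop := ~ Le p (Jn (mx p) (Im q (mx q))).

Lemma Rel_co p q : Rel p q <-> ~ Le (Mt q (Co p (mx p))) (mx q).
Proof. unfold Rel. rewrite rel_equiv. tauto. Qed.

Lemma meet_truth p a b : Le p (Mt a b) <-> Le p a /\ Le p b.
Proof. split.
  - intro H; split; eapply le_trans; eauto using meet_lb1, meet_lb2.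
  - intros [H1 H2]; apply meet_glb; auto.
Qed.
Lemma join_truth p a b : is_point p -> inD a -> inD b -> (Le p (Jn a b) <-> Le p a \/ Le p b).
Proof. intros [_ [_ Hpr]] Ha Hb. split; [apply Hpr; auto|].
  intros [H|H]; eapply le_trans; eauto using join_ub1, join_ub2. Qed.

Lemma imp_truth p a b : is_point p -> inD a -> inD b -> inD (Im a b) ->
  (Le p (Im a b) <-> forall q, is_point q -> Rel p q -> Le q a -> Le q b).
Proof.
  intros Hp Ha Hb Hab. split.
  - intros H q Hq HR Hqa. apply NNPP; intro Hqb. apply HR.
    eapply le_trans; [|apply join_ub2]. eapply le_trans; [exact H|].
    eapply le_trans; [apply imp_anti1; exact Hqa|]. apply imp_mono2. apply mx_ge; auto.
  - intro H. apply NNPP; intro Hn.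
    pose proof (mx_ge p _ Hab Hn) as Hm.
    set (Pr := fun x => ~ Le p (Jn (mx p) (Im x b))).
    assert (Hmon : forall x y, Le x y -> Pr x -> Pr y).
    { unfold Pr; intros x y Hxy Hx Hy. apply Hx. eapply le_trans; [exact Hy|].
      apply join_mono; [apply le_refl|apply imp_anti1; auto]. }
    assert (Hsp : forall x y, Pr (Jn x y) -> Pr x \/ Pr y).
    { unfold Pr; intros x y H1. apply NNPP; intro H2. apply not_or_and in H2.
      destruct H2 as [H2 H3]. apply NNPP in H2. apply NNPP in H3. apply H1.
      eapply le_trans; [apply (meet_glb _ _ _ H2 H3)|]. eapply le_trans; [apply distr2|].
      rewrite imp_join. apply le_refl. }
    assert (H0 : ~ Pr Bt).
    { unfold Pr; intro H1. apply H1. rewrite imp_top; [|apply bot_le].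
      eapply le_trans; [apply le_top|apply join_ub2]. }
    assert (Ha' : Pr a).
    { unfold Pr; intro H1. apply (mx_not p Hp). eapply le_trans; [exact H1|].
      apply join_lub; [apply le_refl|auto]. }
    destruct (point_of_min Pr a Hmon Hsp H0 Ha Ha') as [q [Hq [Hqa [HPq Hmin]]]].
    assert (Hqb : ~ Le q b).
    { intro H1. apply HPq. rewrite imp_top; auto. eapply le_trans; [apply le_top|apply join_ub2]. }
    apply Hqb. apply H; auto.
    intro HR. 
    assert (Hz : ~ Pr (Mt q (mx q))).
    { intro H1. apply (mx_not q Hq). eapply le_trans; [apply (Hmin (Mt q (mx q)))|apply meet_lb2].
      - apply inD_meet; [destruct Hq; auto|apply mx_inD].
      - apply meet_lb1.
      - auto. }
    unfold Pr in Hz. apply NNPP in Hz. apply HPq.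
    eapply le_trans; [apply (meet_glb _ _ _ HR Hz)|]. eapply le_trans; [apply distr2|].
    apply join_mono; [apply le_refl|]. eapply le_trans; [|apply (imp_trL q (Mt q (mx q)) b)].
    apply meet_mono; [|apply le_refl]. rewrite imp_meet, imp_refl.
    apply meet_glb; [apply le_top|apply le_refl].
Qed.

Lemma coimp_truth q a b : is_point q -> inD a -> inD b -> inD (Co a b) ->
  (Le q (Co a b) <-> exists p, is_point p /\ Rel p q /\ Le p a /\ ~ Le p b).
Proof.
  intros Hq Ha Hb Hab. split.
  - intro H.
    set (Pr := fun x => ~ Le (Mt q (Co x b)) (mx q)).
    assert (Hmon : forall x y, Le x y -> Pr x -> Pr y).
    { unfold Pr; intros x y Hxy Hx Hy. apply Hx. eapply le_trans; [|exact Hy].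
      apply meet_mono; [apply le_refl|apply coimp_mono1; auto]. }
    assert (Hsp : forall x y, Pr (Jn x y) -> Pr x \/ Pr y).
    { unfold Pr; intros x y H1. apply NNPP; intro H2. apply not_or_and in H2.
      destruct H2 as [H2 H3]. apply NNPP in H2. apply NNPP in H3. apply H1.
      rewrite coimp_join, meet_join_distr. apply join_lub; auto. }
    assert (H0 : ~ Pr Bt).
    { unfold Pr; intro H1. apply H1. eapply le_trans; [apply meet_lb2|].
      eapply le_trans; [apply coimp_le_bot, bot_le|apply bot_le]. }
    assert (Ha' : Pr a).
    { unfold Pr; intro H1. apply (mx_not q Hq). eapply le_trans; [|exact H1].
      apply meet_glb; [apply le_refl|auto]. }
    destruct (point_of_min Pr a Hmon Hsp H0 Ha Ha') as [p [Hp [Hpa [HPp Hmin]]]].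
    exists p. split; [auto|split; [|split; [auto|]]].
    + apply Rel_co. intro HR.
      assert (Hz : ~ Pr (Mt p (mx p))).
      { intro H1. apply (mx_not p Hp). eapply le_trans; [apply (Hmin (Mt p (mx p)))|apply meet_lb2].
        - apply inD_meet; [destruct Hp; auto|apply mx_inD].
        - apply meet_lb1.
        - auto. }
      unfold Pr in Hz. apply NNPP in Hz. apply HPp.
      eapply le_trans; [apply meet_mono; [apply le_refl|apply (coimp_trL p (Mt p (mx p)) b)]|].
      rewrite meet_join_distr. apply join_lub; auto.
      eapply le_trans; [|exact HR]. apply meet_mono; [apply le_refl|].
      rewrite coimp_meet, coimp_refl. apply join_lub; [apply bot_le|apply le_refl].
    + intro H1. apply HPp. eapply le_trans; [apply meet_lb2|].
      eapply le_trans; [apply coimp_le_bot; auto|apply bot_le].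
  - intros [p [Hp [HR [Hpa Hpb]]]]. apply NNPP; intro Hn.
    apply Rel_co in HR. apply HR. eapply le_trans; [apply meet_lb2|].
    eapply le_trans; [|apply (mx_ge q _ Hab Hn)].
    eapply le_trans; [apply coimp_mono1; exact Hpa|]. apply coimp_anti2. apply mx_ge; auto.
Qed.

Definition Pt := {p : A | is_point p}.
Definition RP (x y : Pt) : Prop := Rel (proj1_sig x) (proj1_sig y).
Definition FA : WHBAlgebra := powalg Pt RP.

Fixpoint mkpts (l : list A) : list Pt :=
  match l with
  | [] => []
  | x :: r => match excluded_middle_informative (is_point x) with
              | left h => exist _ x h :: mkpts r
              | right _ => mkpts r
              end
  end.
Lemma mkpts_in (p : Pt) l : In (proj1_sig p) l -> In p (mkpts l).
Proof. destruct p as [x hx]. simpl. induction l as [|y r IH]; simpl; [tauto|].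
  intros [->|H].
  - destruct (excluded_middle_informative (is_point x)) as [h|h]; [|tauto].
    left. f_equal. apply proof_irrelevance.
  - destruct (excluded_middle_informative (is_point y)); [right|]; auto.
Qed.

Lemma FA_finite : finite_algebra FA.
Proof.
  set (lp := mkpts DL).
  assert (Hlp : forall p : Pt, In p lp).
  { intro p. apply mkpts_in. apply inD_DL. exact (proj1 (proj2_sig p)). }
  exists (map (fun s : list Pt => (fun x : Pt => In x s) : FA) (pw lp)).
  intro U. apply in_map_iff. exists (filter (fun x => dec (U x)) lp). split; [|apply filter_pw].
  extensionality x. apply propositional_extensionality. rewrite filter_In, dec_spec.
  split; [tauto|]. intro; split; auto.
Qed.

Fixpoint subs (u : term) : list term :=
  u :: match u with
       | tMeet a b | tJoin a b | tImp a b | tCoimp a b => subs a ++ subs b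
       | _ => []
       end.

Definition sem (a : A) : FA := fun x : Pt => Le (proj1_sig x) a.

Lemma truth (v : nat -> A) (u : term) :
  (forall w, In w (subs u) -> inD (eval A v w)) ->
  eval FA (fun n => sem (v n)) u = sem (eval A v u).
Proof.
  induction u as [n|a IHa b IHb|a IHa b IHb|a IHa b IHb|a IHa b IHb| |]; intro H;
  try (assert (HA : forall w, In w (subs a) -> inD (eval A v w))
         by (intros w Hw; apply H; simpl; right; apply in_or_app; auto);
       assert (HB : forall w, In w (subs b) -> inD (eval A v w))
         by (intros w Hw; apply H; simpl; right; apply in_or_app; auto);
       assert (Ha : inD (eval A v a)) by (apply HA; destruct a; simpl; auto);
       assert (Hb : inD (eval A v b)) by (apply HB; destruct b; simpl; auto);
       assert (Hu : inD (eval A v _)) by (apply H; simpl; left; reflexivity);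
       simpl; rewrite (IHa HA), (IHb HB); unfold sem; extensionality x;
       apply propositional_extensionality; destruct x as [x hx]; simpl).
  - reflexivity.
  - cbn. unfold pmeet. simpl. rewrite meet_truth. tauto.
  - cbn. unfold pjoin. simpl. rewrite join_truth; auto. tauto.
  - cbn. unfold pimp. simpl. rewrite imp_truth; auto. split.
    + intros H1 q Hq HR Hqa. exact (H1 (exist _ q Hq) HR Hqa).
    + intros H1 [y hy] HR Hya. exact (H1 y hy HR Hya).
  - cbn. unfold pcoimp. simpl. rewrite coimp_truth; auto. split.
    + intros [[y hy] [HR [H1 H2]]]. exists y; auto.
    + intros [y [hy [HR [H1 H2]]]]. exists (exist _ y hy); auto.
  - simpl. unfold sem. extensionality x. apply propositional_extensionality.
    pose proof (proj1 (proj2 (proj2_sig x))) as hx. cbn. unfold pbot. split; [intros []|intro H0; exact (hx H0)].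
  - simpl. unfold sem. extensionality x. apply propositional_extensionality.
    cbn. unfold ptop. split; auto. intros _. apply le_top.
Qed.
End Lat.

Theorem corollary6p20 :
  forall s t : term,
    (exists A : WHBAlgebra, fails_in A s t) ->
    exists A : WHBAlgebra, finite_algebra A /\ fails_in A s t.
Proof.
  intros s t [A [v Hv]].
  set (G := map (eval A v) (subs s ++ subs t)).
  assert (HS : forall w, In w (subs s) -> inD A G (eval A v w)).
  { intros w Hw. apply inD_G. unfold G. apply in_map. apply in_or_app; auto. }
  assert (HT : forall w, In w (subs t) -> inD A G (eval A v w)).
  { intros w Hw. apply inD_G. unfold G. apply in_map. apply in_or_app; auto. }
  exists (FA A G). split; [apply FA_finite|].
  exists (fun n => sem A G (v n)).
  rewrite (truth A G v s HS), (truth A G v t HT).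
  assert (Hs : inD A G (eval A v s)) by (apply HS; destruct s; simpl; auto).
  assert (Ht : inD A G (eval A v t)) by (apply HT; destruct t; simpl; auto).
  intro E.
  assert (Hsep : forall a b, inD A G a -> ~ le A a b -> sem A G a <> sem A G b).
  { intros a b Ha Hab Eab.
    destruct (point_of_min A G (fun x => ~ le A x b) a) as [p [Hp [Hpa [Hpb _]]]]; auto.
    - intros x y Hxy Hx Hy. apply Hx. eapply le_trans; eauto.
    - intros x y H1. apply NNPP; intro H2. apply not_or_and in H2. destruct H2 as [H2 H3].
      apply NNPP in H2. apply NNPP in H3. apply H1. apply join_lub; auto.
    - intro H1. apply H1. apply bot_le.
    - apply Hpb. pose proof (f_equal (fun f : FA A G => f (exist _ p Hp)) Eab) as E2.
      unfold sem in E2. simpl in E2. rewrite <- E2. exact Hpa. }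
  destruct (classic (le A (eval A v s) (eval A v t))) as [H1|H1].
  - destruct (classic (le A (eval A v t) (eval A v s))) as [H2|H2].
    + apply Hv. apply le_antisym; auto.
    + apply (Hsep _ _ Ht H2). symmetry; exact E.
  - apply (Hsep _ _ Hs H1 E).
Qed.
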